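(* Suppose $\psi\in\Psi^*$, $s,s'\in\Omega_2$ and $|s-s'|\le(\mathcal{L}\log\mathcal{L})^{-1}$. Then $$\frac{F(s,\psi)}{F(s',\psi)}=1+O\big(|s-s'|\mathcal{L}\log\mathcal{L}\big).$$
   Context: Standing conventions: $\chi$ is a real primitive Dirichlet character of modulus $D$, where $D$ exceeds a sufficiently large absolute constant; implied constants are absolute. $\mathcal{L}=\log D$, $Q=\exp(\mathcal{L}^2)$, $\alpha=\mathcal{L}^{-2}$, $s_0=\tfrac12+iD$. Let $\mathcal{Q}$ be the set of integers $q$ with $Q<q<2Q$, $\gcd(q,6)=1$, $q$ squarefree; $\Psi_q$ the set of primitive characters $\psi\bmod q$ with $\psi\chi$ primitive modulo $\mathrm{lcm}(q,D)$; $\Psi=\bigcup_q\Psi_q$. Define $\nu,\upsilon$ by $\sum\nu(n)n^{-s}=\zeta(s)L(s,\chi)$, $\sum\upsilon(n)n^{-s}=\zeta(s)^{-1}L(s,\chi)^{-1}$; $F(s,\psi)=\sum_{n\le D^5}\nu(n)\psi(n)n^{-s}$, $G(s,\psi)=\sum_{n\le D^5}\upsilon(n)\psi(n)n^{-s}$; $\Delta(s,\psi)=L(s,\psi)/L(1-s,\bar\psi)$, $\Delta_1(s,\psi)=\Delta(s,\psi)\Delta(s,\psi\chi)$, $\mathcal{F}(s,\psi)=F(s,\psi)+\Delta_1(s,\psi)F(1-s,\bar\psi)$. $\Omega_1=\{s:-2\alpha^{1/2}<\mathrm{Re}(s-s_0)<1,\ |\mathrm{Im}(s-s_0)|<1+20\mathcal{L}\}$,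 $\Omega_2=\{s:-\tfrac1{10}\alpha\log\mathcal{L}<\mathrm{Re}(s-s_0)<\tfrac12,\ |\mathrm{Im}(s-s_0)|<1+10\mathcal{L}\}$. $\Psi^*$ is the set of $\psi\in\Psi$ with (I1) $\sup_{\Omega_1}\{|F|+|G|\}<\mathcal{L}^3\log\mathcal{L}$, (I2) $\sup_{\Omega_1}|FG-1|<\tfrac12$, (I3) $\sup_{\Omega_2}|L(s,\psi)L(s,\psi\chi)-\mathcal{F}(s,\psi)|<\mathcal{L}^{-24/5}$. *)

(* Defs.v *)
From Stdlib Require Import Reals Arith List.
From Coquelicot Require Import Coquelicot.
Import ListNotations.
Open Scope R_scope.

Definition Csum (l : list C) : C := fold_right Cplus (RtoC 0) l.

Definition divisors (n : nat) : list nat :=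
  filter (fun d => Nat.eqb (n mod d) 0) (seq 1 n).

(* n^{-s} for a positive integer n and complex s = sigma + i t:
   n^{-s} = n^{-sigma} (cos (t log n) - i sin (t log n)). *)
Definition npow_neg (n : nat) (s : C) : C :=
  let l := ln (INR n) in
  Cmult (RtoC (exp (- (Re s) * l))) (cos (Im s * l), - sin (Im s * l)).

Definition dirichlet_char (q : nat) (f : nat -> C) : Prop :=
  (1 <= q)%nat /\
  f 1%nat = RtoC 1 /\
  (forall m n : nat, f (m * n)%nat = Cmult (f m) (f n)) /\
  (forall n : nat, f (n + q)%nat = f n) /\
  (forall n : nat, Nat.gcd n q = 1%nat -> f n <> RtoC 0) /\
  (forall n : nat, Nat.gcd n q <> 1%nat -> f n = RtoC 0).

(* primitive: not induced by a character of any proper divisor modulus d *)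
Definition primitive_char (q : nat) (f : nat -> C) : Prop :=
  dirichlet_char q f /\
  forall d : nat, Nat.divide d q -> (d < q)%nat ->
    exists n : nat, n mod d = 1 mod d /\ Nat.gcd n q = 1%nat /\ f n <> RtoC 1.

Definition real_char (f : nat -> C) : Prop := forall n : nat, Im (f n) = 0.

Definition char_mul (f g : nat -> C) : nat -> C := fun n => Cmult (f n) (g n).
Definition char_conj (f : nat -> C) : nat -> C := fun n => Cconj (f n).

Definition partial_L (f : nat -> C) (s : C) (N : nat) : C :=
  Csum (map (fun n => Cmult (f n) (npow_neg n s)) (seq 1 N)).

(* For a non-principal character
   this series converges for Re s > 0 and equals the analytic continuation of
   L(s,f) there; it is only used in this range. *)
Definition Lfun (f : nat -> C) (s : C) : C :=
  (real (Lim_seq (fun N => Re (partial_L f s N))),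
   real (Lim_seq (fun N => Im (partial_L f s N)))).

Definition Delta (psi : nat -> C) (s : C) : C :=
  Cdiv (Lfun psi s) (Lfun (char_conj psi) (Cminus (RtoC 1) s)).

Definition Delta1 (chi psi : nat -> C) (s : C) : C :=
  Cmult (Delta psi s) (Delta (char_mul psi chi) s).

Definition LL (D : nat) : R := ln (INR D).
Definition QQ (D : nat) : R := exp (LL D ^ 2).
Definition alpha (D : nat) : R := / (LL D ^ 2).
Definition s0 (D : nat) : C := (/ 2, INR D).

(* zeta(s) L(s,chi) = sum nu(n) n^{-s},  nu(n) = sum_{d | n} chi(d) *)
Definition nu (chi : nat -> C) (n : nat) : C := Csum (map chi (divisors n)).

(* upsilon = Dirichlet-convolution inverse of nu (so that
   sum upsilon(n) n^{-s} = 1/(zeta(s) L(s,chi))), defined by the recursion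
   upsilon(1) = 1, upsilon(n) = - sum_{d | n, d < n} upsilon(d) nu(n/d). *)
Fixpoint ups_aux (chi : nat -> C) (k n : nat) : C :=
  match k with
  | O => RtoC 0
  | S k' =>
      if Nat.eqb n 1 then RtoC 1
      else Copp (Csum (map (fun d => Cmult (ups_aux chi k' d) (nu chi (n / d)))
                           (filter (fun d => Nat.ltb d n) (divisors n))))
  end.
Definition upsilon (chi : nat -> C) (n : nat) : C := ups_aux chi n n.

Definition FF (D : nat) (chi psi : nat -> C) (s : C) : C :=
  Csum (map (fun n => Cmult (Cmult (nu chi n) (psi n)) (npow_neg n s)) (seq 1 (D ^ 5))).
Definition GG (D : nat) (chi psi : nat -> C) (s : C) : C :=
  Csum (map (fun n => Cmult (Cmult (upsilon chi n) (psi n)) (npow_neg n s)) (seq 1 (D ^ 5))).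

Definition FFcal (D : nat) (chi psi : nat -> C) (s : C) : C :=
  Cplus (FF D chi psi s)
        (Cmult (Delta1 chi psi s) (FF D chi (char_conj psi) (Cminus (RtoC 1) s))).

Definition Omega1 (D : nat) (s : C) : Prop :=
  - 2 * sqrt (alpha D) < Re (Cminus s (s0 D)) < 1 /\
  Rabs (Im (Cminus s (s0 D))) < 1 + 20 * LL D.
Definition Omega2 (D : nat) (s : C) : Prop :=
  - (1 / 10) * alpha D * ln (LL D) < Re (Cminus s (s0 D)) < 1 / 2 /\
  Rabs (Im (Cminus s (s0 D))) < 1 + 10 * LL D.

Definition squarefree (q : nat) : Prop :=
  forall p : nat, (2 <= p)%nat -> ~ Nat.divide (p * p) q.

Definition in_Qset (D q : nat) : Prop :=
  QQ D < INR q < 2 * QQ D /\ Nat.gcd q 6 = 1%nat /\ squarefree q.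

Definition in_Psi_q (D : nat) (chi : nat -> C) (q : nat) (psi : nat -> C) : Prop :=
  primitive_char q psi /\ primitive_char (Nat.lcm q D) (char_mul psi chi).

Definition in_Psi (D : nat) (chi : nat -> C) (psi : nat -> C) : Prop :=
  exists q : nat, in_Qset D q /\ in_Psi_q D chi q psi.

Definition sup_lt (Omega : C -> Prop) (g : C -> R) (B : R) : Prop :=
  exists M : R, M < B /\ forall s : C, Omega s -> g s <= M.

Definition in_Psi_star (D : nat) (chi : nat -> C) (psi : nat -> C) : Prop :=
  in_Psi D chi psi /\
  sup_lt (Omega1 D) (fun s => Cmod (FF D chi psi s) + Cmod (GG D chi psi s))
         (LL D ^ 3 * ln (LL D)) /\
  sup_lt (Omega1 D) (fun s => Cmod (Cminus (Cmult (FF D chi psi s) (GG D chi psi s)) (RtoC 1)))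
         (1 / 2) /\
  sup_lt (Omega2 D)
         (fun s => Cmod (Cminus (Cmult (Lfun psi s) (Lfun (char_mul psi chi) s))
                                (FFcal D chi psi s)))
         (Rpower (LL D) (- (24 / 5))).

(* Main.v *)
Require Import Defs.
From Stdlib Require Import Reals Lra Psatz List.
From Coquelicot Require Import Coquelicot.
Open Scope R_scope.

Lemma Rd_plus (f g : R -> R) (x a b : R) : is_derive f x a -> is_derive g x b ->
  is_derive (fun t => f t + g t) x (a + b).
Proof. intros; apply (is_derive_plus f g); auto. Qed.
Lemma Rd_minus (f g : R -> R) (x a b : R) : is_derive f x a -> is_derive g x b ->
  is_derive (fun t => f t - g t) x (a - b).
Proof. intros; apply (is_derive_minus f g); auto. Qed.
Lemma Rd_mult (f g : R -> R) (x a b : R) : is_derive f x a -> is_derive g x b ->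
  is_derive (fun t => f t * g t) x (a * g x + f x * b).
Proof. intros; apply (is_derive_mult f g); auto. intros; apply Rmult_comm. Qed.
Lemma Rd_const (c x : R) : is_derive (fun _ => c) x 0.
Proof. apply (is_derive_const c). Qed.
Lemma Rd_eq (f : R -> R) (x a b : R) : a = b -> is_derive f x a -> is_derive f x b.
Proof. intros ->; auto. Qed.
Lemma Rd_inv (f : R -> R) (x a : R) : is_derive f x a -> f x <> 0 ->
  is_derive (fun t => / f t) x (- a / (f x ^ 2)).
Proof. intros; apply is_derive_inv; auto. Qed.

Definition CD (g : R -> C) (t : R) (l : C) : Prop :=
  is_derive (fun t => fst (g t)) t (fst l) /\ is_derive (fun t => snd (g t)) t (snd l).

Lemma CD_ext (g h : R -> C) t l : (forall t, g t = h t) -> CD g t l -> CD h t l.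
Proof. intros E [H1 H2]; split; eapply is_derive_ext; eauto; intros; simpl; rewrite E; auto. Qed.
Lemma CD_eq g t l m : l = m -> CD g t l -> CD g t m.
Proof. intros ->; auto. Qed.
Lemma CD_const (c : C) t : CD (fun _ => c) t (RtoC 0).
Proof. split; simpl; apply Rd_const. Qed.
Lemma CD_plus g h t l m : CD g t l -> CD h t m -> CD (fun t => Cplus (g t) (h t)) t (Cplus l m).
Proof. intros [A B] [E F]; split; simpl; apply Rd_plus; auto. Qed.
Lemma CD_mult g h t l m : CD g t l -> CD h t m ->
  CD (fun t => Cmult (g t) (h t)) t (Cplus (Cmult l (h t)) (Cmult (g t) m)).
Proof.
  intros [A B] [E F]; split; simpl.
  - eapply Rd_eq. 2:(apply Rd_minus; apply Rd_mult; eauto). cbv beta; ring.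
  - eapply Rd_eq. 2:(apply Rd_plus; apply Rd_mult; eauto). cbv beta; ring.
Qed.
Lemma CD_inv g t l : g t <> RtoC 0 -> CD g t l ->
  CD (fun t => Cinv (g t)) t (Copp (Cdiv l (Cmult (g t) (g t)))).
Proof.
  intros Hn [A B].
  set (gx := fun t => fst (g t)) in *. set (gy := fun t => snd (g t)) in *.
  assert (Hp : gx t * gx t + gy t * gy t <> 0).
  { intro H0; apply Hn. unfold gx, gy in H0. destruct (g t) as [a b]; simpl in *.
    assert (a = 0) by nra. assert (b = 0) by nra. subst; auto. }
  assert (HD : is_derive (fun t => / (gx t * gx t + gy t * gy t)) t
     (- (fst l * gx t + gx t * fst l + (snd l * gy t + gy t * snd l)) / (gx t * gx t + gy t * gy t) ^ 2)).
  { apply (Rd_inv (fun t => gx t * gx t + gy t * gy t)); auto.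
    apply Rd_plus; apply Rd_mult; auto. }
  split.
  - eapply is_derive_ext with (f := fun t => gx t * / (gx t * gx t + gy t * gy t)).
    { intros; unfold gx, gy; simpl; unfold Rdiv; f_equal; f_equal; ring. }
    eapply Rd_eq. 2:(apply Rd_mult; eauto).
    unfold gx, gy in *. destruct (g t) as [a b]; destruct l as [c d]; simpl in *.
    field. split; auto. replace ((a * a - b * b) * (a * a - b * b) + (a * b + b * a) * (a * b + b * a)) with ((a*a+b*b)*(a*a+b*b)) by ring. apply Rmult_integral_contrapositive; auto.
  - eapply is_derive_ext with (f := fun t => - gy t * / (gx t * gx t + gy t * gy t)).
    { intros; unfold gx, gy; simpl; unfold Rdiv; f_equal; f_equal; ring. }
    eapply Rd_eq. 2:(apply Rd_mult; [apply (is_derive_opp gy); eauto| eauto]).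
    unfold gx, gy in *. destruct (g t) as [a b]; destruct l as [c d]; simpl in *.
    change (opp d) with (- d). field. split; auto. replace ((a * a - b * b) * (a * a - b * b) + (a * b + b * a) * (a * b + b * a)) with ((a*a+b*b)*(a*a+b*b)) by ring. apply Rmult_integral_contrapositive; auto.
Qed.

Lemma Rd_ext (f g : R -> R) x a : (forall t, f t = g t) -> is_derive f x a -> is_derive g x a.
Proof. apply is_derive_ext. Qed.

Lemma Rd_comp1 (F dF : R -> R) (f : R -> R) x a :
  (forall y, is_derive F y (dF y)) -> is_derive f x a ->
  is_derive (fun t => F (f t)) x (a * dF (f x)).
Proof. intros HF Hf. apply (is_derive_comp F f); auto. Qed.
Lemma Rd_exp f x a : is_derive f x a -> is_derive (fun t => exp (f t)) x (a * exp (f x)).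
Proof. intros; apply (Rd_comp1 exp exp); auto. intros; apply is_derive_Reals, derivable_pt_lim_exp. Qed.
Lemma Rd_cos f x a : is_derive f x a -> is_derive (fun t => cos (f t)) x (a * - sin (f x)).
Proof. intros; apply (Rd_comp1 cos (fun y => - sin y)); auto. intros; apply is_derive_Reals, derivable_pt_lim_cos. Qed.
Lemma Rd_sin f x a : is_derive f x a -> is_derive (fun t => sin (f t)) x (a * cos (f x)).
Proof. intros; apply (Rd_comp1 sin cos); auto. intros; apply is_derive_Reals, derivable_pt_lim_sin. Qed.
Lemma Rd_scal (f : R -> R) x a k : is_derive f x a -> is_derive (fun t => f t * k) x (a * k).
Proof. intros H. eapply Rd_eq. 2:(apply Rd_mult; [exact H| apply Rd_const]). cbv beta; ring. Qed.

Lemma CD_npow n (g : R -> C) t v : CD g t v ->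
  CD (fun t => npow_neg n (g t)) t
     (Cmult (Cmult (RtoC (- ln (INR n))) v) (npow_neg n (g t))).
Proof.
  intros [A B]. unfold npow_neg. set (l := ln (INR n)).
  split.
  - eapply Rd_ext with (f := fun t => exp (- fst (g t) * l) * cos (snd (g t) * l)).
    { intros; cbv [Cmult RtoC Re Im fst snd]; ring. }
    eapply Rd_eq. 2:(apply Rd_mult; [apply Rd_exp; apply Rd_scal; apply (is_derive_opp (fun t => fst (g t))); exact A
                                     | apply Rd_cos; apply Rd_scal; exact B]).
    change (opp (fst v)) with (- fst v). simpl. unfold Re, Im. ring.
  - eapply Rd_ext with (f := fun t => - (exp (- fst (g t) * l) * sin (snd (g t) * l))).
    { intros; cbv [Cmult RtoC Re Im fst snd]; ring. }
    eapply Rd_eq. 2:(apply (is_derive_opp (fun t => (exp (- fst (g t) * l) * sin (snd (g t) * l))));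
        apply Rd_mult; [apply Rd_exp; apply Rd_scal; apply (is_derive_opp (fun t => fst (g t))); exact A
                                     | apply Rd_sin; apply Rd_scal; exact B]).
    change (opp (fst v)) with (- fst v). change (opp ?x) with (- x). simpl. unfold Re, Im. ring.
Qed.

Definition dpl (a : nat -> C) (l : list nat) (s : C) : C :=
  Csum (map (fun n => Cmult (a n) (npow_neg n s)) l).
Definition dcoef (a : nat -> C) (n : nat) : C := Cmult (a n) (RtoC (- ln (INR n))).

Lemma CD_dp a l g t v : CD g t v ->
  CD (fun t => dpl a l (g t)) t (Cmult (dpl (dcoef a) l (g t)) v).
Proof.
  intros Hg. induction l as [|n l IH].
  - unfold dpl; simpl. eapply CD_eq; [|apply CD_const]. ring.
  - unfold dpl in *; simpl.
    eapply CD_eq; [|apply CD_plus; [apply CD_mult; [apply CD_const | apply CD_npow; exact Hg] | exact IH]].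
    unfold dcoef. ring.
Qed.

Definition C2cont (G : R -> R -> C) (x y : R) : Prop :=
  continuity_2d_pt (fun u v => fst (G u v)) x y /\ continuity_2d_pt (fun u v => snd (G u v)) x y.

Lemma C2cont_ext (G H : R -> R -> C) x y : (forall u v, G u v = H u v) -> C2cont G x y -> C2cont H x y.
Proof.
  intros E [A B]; split; [apply (continuity_2d_pt_ext (fun u v => fst (G u v))) | apply (continuity_2d_pt_ext (fun u v => snd (G u v)))]; auto; intros; rewrite E; auto.
Qed.
Lemma C2cont_const c x y : C2cont (fun _ _ => c) x y.
Proof. split; apply continuity_2d_pt_const. Qed.
Lemma C2cont_plus G H x y : C2cont G x y -> C2cont H x y -> C2cont (fun u v => Cplus (G u v) (H u v)) x y.
Proof. intros [A B] [E F]; split; simpl; apply continuity_2d_pt_plus; auto. Qed.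
Lemma C2cont_mult G H x y : C2cont G x y -> C2cont H x y -> C2cont (fun u v => Cmult (G u v) (H u v)) x y.
Proof.
  intros [A B] [E F]; split; simpl;
  [apply continuity_2d_pt_minus | apply continuity_2d_pt_plus]; apply continuity_2d_pt_mult; auto.
Qed.
Lemma C2cont_opp G x y : C2cont G x y -> C2cont (fun u v => Copp (G u v)) x y.
Proof. intros [A B]; split; simpl; apply continuity_2d_pt_opp; auto. Qed.
Lemma C2cont_inv G x y : G x y <> RtoC 0 -> C2cont G x y -> C2cont (fun u v => Cinv (G u v)) x y.
Proof.
  intros Hn [A B].
  assert (Hp : fst (G x y) ^ 2 + snd (G x y) ^ 2 <> 0).
  { intro H0; apply Hn. destruct (G x y) as [a b]; simpl in *.
    assert (a = 0) by nra. assert (b = 0) by nra. subst; auto. }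
  assert (HC : continuity_2d_pt (fun u v => / (fst (G u v) ^ 2 + snd (G u v) ^ 2)) x y).
  { apply continuity_2d_pt_inv; auto. apply continuity_2d_pt_plus;
    simpl; apply continuity_2d_pt_mult; auto; apply continuity_2d_pt_mult; auto; apply continuity_2d_pt_const. }
  split; simpl; unfold Rdiv; apply continuity_2d_pt_mult; auto.
  apply continuity_2d_pt_opp; auto.
Qed.
Lemma C2cont_real (f : R -> R -> R) x y : continuity_2d_pt f x y -> C2cont (fun u v => RtoC (f u v)) x y.
Proof. intros; split; simpl; auto. apply continuity_2d_pt_const. Qed.

Lemma c2_comp1 (F : R -> R) f x y : (forall z, continuity_pt F z) -> continuity_2d_pt f x y ->
  continuity_2d_pt (fun u v => F (f u v)) x y.
Proof. intros; apply continuity_1d_2d_pt_comp; auto. Qed.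

Lemma C2cont_npow n W x y : C2cont W x y -> C2cont (fun u v => npow_neg n (W u v)) x y.
Proof.
  intros [A B]. unfold npow_neg.
  apply C2cont_mult.
  - apply C2cont_real. apply c2_comp1; [apply (derivable_continuous _ derivable_exp)|].
    apply continuity_2d_pt_mult; [apply continuity_2d_pt_opp; exact A| apply continuity_2d_pt_const].
  - split; simpl.
    + apply c2_comp1; [apply continuity_cos|]. apply continuity_2d_pt_mult; [exact B| apply continuity_2d_pt_const].
    + apply continuity_2d_pt_opp. apply c2_comp1; [apply continuity_sin|]. apply continuity_2d_pt_mult; [exact B| apply continuity_2d_pt_const].
Qed.

Lemma C2cont_dp a l W x y : C2cont W x y -> C2cont (fun u v => dpl a l (W u v)) x y.
Proof.
  intros HW. induction l as [|n l IH].
  - unfold dpl; simpl; apply C2cont_const.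
  - unfold dpl in *; simpl. apply C2cont_plus; auto. apply C2cont_mult; [apply C2cont_const|].
    apply C2cont_npow; auto.
Qed.

Lemma c2_cont_v (f : R -> R -> R) x y : continuity_2d_pt f x y -> continuous (fun v => f x v) y.
Proof.
  intros H P [eps HP]. destruct (H eps) as [d Hd].
  exists d. intros v Hv. apply HP. apply (Hd x v); auto.
  rewrite Rminus_eq_0, Rabs_R0. apply cond_pos.
Qed.

Lemma ex_RInt_c2 (f : R -> R -> R) x a b :
  (forall t, Rmin a b <= t <= Rmax a b -> continuity_2d_pt f x t) -> ex_RInt (fun t => f x t) a b.
Proof. intros H. apply (ex_RInt_continuous (V := R_CompleteNormedModule)). intros; apply c2_cont_v; auto. Qed.

Lemma locally_abs_lt (x Rr : R) : Rabs x < Rr -> locally x (fun y => Rabs y < Rr).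
Proof.
  intros H. assert (Hp : 0 < Rr - Rabs x) by lra.
  exists (mkposreal _ Hp). intros y Hy. change (Rabs (y - x) < Rr - Rabs x) in Hy.
  pose proof (Rabs_triang_inv y x). pose proof (Rabs_triang (y - x) x).
  assert (E : (y - x + x = y :> R)) by ring. rewrite E in H1. lra.
Qed.

Lemma param_deriv (A A1 : R -> R -> R) (Rr a b x : R) :
  (forall r t, Rabs r < Rr -> is_derive (fun u => A u t) r (A1 r t)) ->
  (forall r t, Rabs r < Rr -> continuity_2d_pt A1 r t) ->
  (forall r t, Rabs r < Rr -> continuity_2d_pt A r t) ->
  Rabs x < Rr ->
  is_derive (fun r => RInt (fun t => A r t) a b) x (RInt (fun t => A1 x t) a b).
Proof.
  intros HD HC1 HC Hx.
  assert (E : RInt (fun t => A1 x t) a b = RInt (fun t => Derive (fun u => A u t) x) a b).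
  { apply RInt_ext; intros; symmetry; apply is_derive_unique; auto. }
  rewrite E. apply (is_derive_RInt_param A).
  - generalize (locally_abs_lt x Rr Hx). apply filter_imp. intros y Hy t _. eexists; apply HD; auto.
  - intros t _. apply continuity_2d_pt_ext_loc with (f := A1); auto.
    assert (Hp : 0 < Rr - Rabs x) by lra. exists (mkposreal _ Hp). intros u v Hu _.
    symmetry; apply is_derive_unique; apply HD.
    pose proof (Rabs_triang (u - x) x). assert (E' : (u - x + x = u :> R)) by ring. rewrite E' in H. simpl in Hu. lra.
  - generalize (locally_abs_lt x Rr Hx). apply filter_imp. intros y Hy.
    apply ex_RInt_c2; intros; apply HC; auto.
Qed.

Lemma RInt_lin2 (f g : R -> R) a b p q : ex_RInt f a b -> ex_RInt g a b ->
  RInt (fun t => p * f t + q * g t) a b = p * RInt f a b + q * RInt g a b.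
Proof.
  intros Hf Hg.
  apply (is_RInt_unique (V := R_CompleteNormedModule)).
  apply (is_RInt_plus (V := R_CompleteNormedModule) (fun t => p * f t) (fun t => q * g t));
  apply (is_RInt_scal (V := R_CompleteNormedModule)); apply (RInt_correct (V := R_CompleteNormedModule)); auto.
Qed.

Ltac Rring := match goal with |- ?a = ?b => change (a = b :> R); ring end.
Ltac Rfield := match goal with |- ?a = ?b => change (a = b :> R); field end.
Ltac Rlra := match goal with |- ?a = ?b => change (a = b :> R); lra end.

Lemma RInt_extR (f g : R -> R) a b : (forall x, f x = g x) -> RInt f a b = RInt g a b.
Proof. intros H; apply RInt_ext; intros; apply H. Qed.

Lemma FTC0 (B B' : R -> R) a b :
  (forall t, Rmin a b <= t <= Rmax a b -> is_derive B t (B' t)) ->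
  (forall t, Rmin a b <= t <= Rmax a b -> continuous B' t) -> B b = B a -> RInt B' a b = 0.
Proof.
  intros H1 H2 H3. rewrite (is_RInt_unique (V := R_CompleteNormedModule) B' a b (minus (B b) (B a))).
  - rewrite H3. change (B a - B a = 0). ring.
  - apply (is_RInt_derive (V := R_CompleteNormedModule)); auto.
Qed.

Lemma deriv_cont (f : R -> R) x l : is_derive f x l -> continuity_pt f x.
Proof. intros H. apply continuity_pt_filterlim. apply (ex_derive_continuous (V := R_NormedModule)). eexists; eauto. Qed.

Lemma const_deriv0 (M M' : R -> R) Rr r :
  (forall x, Rabs x < Rr -> is_derive M x (M' x)) ->
  (forall x, 0 < x < Rr -> M' x = 0) -> 0 <= r < Rr -> M r = M 0.
Proof.
  intros HD H0 Hr. destruct (Req_dec r 0) as [->|Hr0]; auto.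
  destruct (MVT_cor2 M M' 0 r) as [c [E Hc]]; [lra| |].
  - intros x Hx. apply is_derive_Reals. apply HD. rewrite Rabs_right by lra. lra.
  - rewrite H0 in E by lra. lra.
Qed.

Definition Ci : C := (0, 1).
Definition ee (j t : R) : C := (cos (j * t), sin (j * t)).

Lemma CD_ee j t : CD (fun t => ee j t) t (Cmult (RtoC j) (Cmult Ci (ee j t))).
Proof.
  unfold ee, Ci; split; simpl; auto_derive; auto; ring.
Qed.

Lemma c2_id2 x y : continuity_2d_pt (fun _ v => v) x y.
Proof. apply continuity_2d_pt_id2. Qed.

Lemma C2cont_ee j x y : C2cont (fun _ t => ee j t) x y.
Proof.
  unfold ee; split; simpl; [apply (c2_comp1 cos) | apply (c2_comp1 sin)];
  try apply continuity_cos; try apply continuity_sin;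
  apply continuity_2d_pt_mult; [apply continuity_2d_pt_const | apply c2_id2 | apply continuity_2d_pt_const | apply c2_id2].
Qed.

Lemma CD_fst g t l : CD g t l -> is_derive (fun t => fst (g t)) t (fst l).
Proof. intros [A _]; exact A. Qed.
Lemma CD_snd g t l : CD g t l -> is_derive (fun t => snd (g t)) t (snd l).
Proof. intros [_ B]; exact B. Qed.

Section Core.
Variables (G G1 : R -> R -> C) (Rr j : R).
Hypothesis H1 : forall r t, Rabs r < Rr -> CD (fun u => G u t) r (Cmult (G1 r t) (ee 1 t)).
Hypothesis H2 : forall r t, Rabs r < Rr ->
   CD (fun t => G r t) t (Cmult (G1 r t) (Cmult (RtoC r) (Cmult Ci (ee 1 t)))).
Hypothesis H3 : forall r t, Rabs r < Rr -> C2cont G r t.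
Hypothesis H4 : forall r t, Rabs r < Rr -> C2cont G1 r t.
Hypothesis H5 : forall r, G r (2*PI) = G r 0.
Hypothesis H6 : ee j (2*PI) = ee j 0.

Let X r t := Cmult (Cmult (G1 r t) (ee 1 t)) (ee j t).
Let Y r t := Cmult (G r t) (ee j t).

Lemma CX r t : Rabs r < Rr -> C2cont X r t.
Proof. intros; unfold X; repeat apply C2cont_mult; auto; apply C2cont_ee. Qed.
Lemma CY r t : Rabs r < Rr -> C2cont Y r t.
Proof. intros; unfold Y; repeat apply C2cont_mult; auto; apply C2cont_ee. Qed.

Lemma DY r t : Rabs r < Rr -> CD (fun u => Y u t) r (X r t).
Proof.
  intros Hr. unfold X, Y. eapply CD_eq. 2:(apply (CD_mult (fun u => G u t) (fun _ => ee j t)); [apply H1; auto | apply CD_const]).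
  ring.
Qed.

Lemma DYt r t : Rabs r < Rr ->
  CD (fun t => Y r t) t (Cmult Ci (Cplus (Cmult (RtoC r) (X r t)) (Cmult (RtoC j) (Y r t)))).
Proof.
  intros Hr. unfold X, Y. eapply CD_eq. 2:(apply (CD_mult (fun t => G r t) (fun t => ee j t)); [apply H2; auto | apply CD_ee]).
  ring.
Qed.

Lemma core_fst x : Rabs x < Rr ->
  is_derive (fun r => RInt (fun t => fst (Y r t)) 0 (2*PI)) x (RInt (fun t => fst (X x t)) 0 (2*PI)) /\
  x * RInt (fun t => fst (X x t)) 0 (2*PI) + j * RInt (fun t => fst (Y x t)) 0 (2*PI) = 0.
Proof.
  intros Hx. split.
  - apply (param_deriv (fun r t => fst (Y r t)) (fun r t => fst (X r t)) Rr); auto.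
    + intros r t Hr. apply CD_fst, DY; auto.
    + intros r t Hr. apply CX; auto.
    + intros r t Hr. apply CY; auto.
  - rewrite <- RInt_lin2.
    + apply (FTC0 (fun t => snd (Y x t))).
      * intros t _. eapply Rd_eq. 2:(apply CD_snd, DYt; auto). unfold Ci. simpl. ring.
      * intros t _. apply (c2_cont_v (fun u t => u * fst (X u t) + j * fst (Y u t))).
        apply continuity_2d_pt_plus; apply continuity_2d_pt_mult;
          try apply continuity_2d_pt_id1; try apply continuity_2d_pt_const; [apply CX|apply CY]; auto.
      * unfold Y. rewrite H5, H6. unfold ee. rewrite !Rmult_0_r. reflexivity.
    + apply ex_RInt_c2 with (f := fun u t => fst (X u t)). intros; apply CX; auto.
    + apply ex_RInt_c2 with (f := fun u t => fst (Y u t)). intros; apply CY; auto.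
Qed.

Lemma core_snd x : Rabs x < Rr ->
  is_derive (fun r => RInt (fun t => snd (Y r t)) 0 (2*PI)) x (RInt (fun t => snd (X x t)) 0 (2*PI)) /\
  x * RInt (fun t => snd (X x t)) 0 (2*PI) + j * RInt (fun t => snd (Y x t)) 0 (2*PI) = 0.
Proof.
  intros Hx. split.
  - apply (param_deriv (fun r t => snd (Y r t)) (fun r t => snd (X r t)) Rr); auto.
    + intros r t Hr. apply CD_snd, DY; auto.
    + intros r t Hr. apply CX; auto.
    + intros r t Hr. apply CY; auto.
  - cut ((- x) * RInt (fun t => snd (X x t)) 0 (2*PI) + (- j) * RInt (fun t => snd (Y x t)) 0 (2*PI) = 0).
    { intros; lra. }
    rewrite <- RInt_lin2.
    + apply (FTC0 (fun t => fst (Y x t))).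
      * intros t _. eapply Rd_eq. 2:(apply CD_fst, DYt; auto). unfold Ci. simpl. ring.
      * intros t _. apply (c2_cont_v (fun u t => - u * snd (X u t) + - j * snd (Y u t))).
        apply continuity_2d_pt_plus; apply continuity_2d_pt_mult;
          try (apply continuity_2d_pt_opp; apply continuity_2d_pt_id1); try apply continuity_2d_pt_const; [apply CX|apply CY]; auto.
      * unfold Y. rewrite H5, H6. unfold ee. rewrite !Rmult_0_r. reflexivity.
    + apply ex_RInt_c2 with (f := fun u t => snd (X u t)). intros; apply CX; auto.
    + apply ex_RInt_c2 with (f := fun u t => snd (Y u t)). intros; apply CY; auto.
Qed.
End Core.

Lemma ee_per0 : ee 0 (2*PI) = ee 0 0.
Proof. unfold ee; rewrite !Rmult_0_l; reflexivity. Qed.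
Lemma ee_per2 : ee 2 (2*PI) = ee 2 0.
Proof.
  unfold ee. replace (2 * (2*PI)) with (2*PI + 2*PI) by ring. rewrite Rmult_0_r.
  rewrite cos_plus, sin_plus, cos_2PI, sin_2PI, cos_0, sin_0. f_equal; ring.
Qed.

Lemma RInt_cos0 : RInt (fun t => cos t) 0 (2*PI) = 0.
Proof.
  apply (FTC0 sin).
  - intros t _. apply is_derive_Reals, derivable_pt_lim_sin.
  - intros t _. apply continuity_pt_filterlim, continuity_cos.
  - rewrite sin_2PI, sin_0; reflexivity.
Qed.
Lemma RInt_sin0 : RInt (fun t => sin t) 0 (2*PI) = 0.
Proof.
  assert (E : RInt (fun t => opp (sin t)) 0 (2*PI) = 0).
  { apply (FTC0 cos).
    - intros t _. apply is_derive_Reals, derivable_pt_lim_cos.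
    - intros t _. apply (continuous_opp (fun t => sin t)). apply continuity_pt_filterlim, continuity_sin.
    - rewrite cos_2PI, cos_0; reflexivity. }
  rewrite (RInt_opp (V := R_CompleteNormedModule)) in E.
  - change (- RInt sin 0 (2*PI) = 0) in E. change (RInt sin 0 (2*PI) = 0). lra.
  - apply (ex_RInt_continuous (V := R_CompleteNormedModule)). intros; apply continuity_pt_filterlim, continuity_sin.
Qed.

Lemma RInt_cos0' : RInt cos 0 (2*PI) = 0.
Proof. exact RInt_cos0. Qed.
Lemma RInt_sin0' : RInt sin 0 (2*PI) = 0.
Proof. exact RInt_sin0. Qed.

Section Disc.
Variables (G G1 : R -> R -> C) (Rr : R).
Hypothesis H1 : forall r t, Rabs r < Rr -> CD (fun u => G u t) r (Cmult (G1 r t) (ee 1 t)).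
Hypothesis H2 : forall r t, Rabs r < Rr ->
   CD (fun t => G r t) t (Cmult (G1 r t) (Cmult (RtoC r) (Cmult Ci (ee 1 t)))).
Hypothesis H3 : forall r t, Rabs r < Rr -> C2cont G r t.
Hypothesis H4 : forall r t, Rabs r < Rr -> C2cont G1 r t.
Hypothesis H5 : forall r, G r (2*PI) = G r 0.
Hypothesis HG0 : forall t, G 0 t = G 0 0.

Lemma M0_fst r : 0 <= r < Rr ->
  RInt (fun t => fst (Cmult (G r t) (ee 0 t))) 0 (2*PI) = 2 * PI * fst (G 0 0).
Proof.
  intros Hr.
  rewrite (const_deriv0 (fun r => RInt (fun t => fst (Cmult (G r t) (ee 0 t))) 0 (2*PI))
     (fun x => RInt (fun t => fst (Cmult (Cmult (G1 x t) (ee 1 t)) (ee 0 t))) 0 (2*PI)) Rr r); auto.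
  - rewrite (RInt_ext _ (fun _ => fst (G 0 0))).
    + rewrite RInt_const. change ((2*PI - 0) * fst (G 0 0) = 2 * PI * fst (G 0 0)). ring.
    + intros t _. rewrite HG0. unfold ee. rewrite !Rmult_0_l, cos_0, sin_0. simpl. ring.
  - intros x Hx. apply (core_fst G G1 Rr 0); auto. apply ee_per0.
  - intros x Hx. destruct (core_fst G G1 Rr 0 H1 H2 H3 H4 H5 ee_per0 x) as [_ E].
    + rewrite Rabs_right; lra.
    + cbv beta in E |- *. rewrite Rmult_0_l, Rplus_0_r in E. apply (Rmult_eq_reg_l x); [|lra]. lra.
Qed.

Lemma M0_snd r : 0 <= r < Rr ->
  RInt (fun t => snd (Cmult (G r t) (ee 0 t))) 0 (2*PI) = 2 * PI * snd (G 0 0).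
Proof.
  intros Hr.
  rewrite (const_deriv0 (fun r => RInt (fun t => snd (Cmult (G r t) (ee 0 t))) 0 (2*PI))
     (fun x => RInt (fun t => snd (Cmult (Cmult (G1 x t) (ee 1 t)) (ee 0 t))) 0 (2*PI)) Rr r); auto.
  - rewrite (RInt_ext _ (fun _ => snd (G 0 0))).
    + rewrite RInt_const. change ((2*PI - 0) * snd (G 0 0) = 2 * PI * snd (G 0 0)). ring.
    + intros t _. rewrite HG0. unfold ee. rewrite !Rmult_0_l, cos_0, sin_0. simpl. ring.
  - intros x Hx. apply (core_snd G G1 Rr 0); auto. apply ee_per0.
  - intros x Hx. destruct (core_snd G G1 Rr 0 H1 H2 H3 H4 H5 ee_per0 x) as [_ E].
    + rewrite Rabs_right; lra.
    + cbv beta in E |- *. rewrite Rmult_0_l, Rplus_0_r in E. apply (Rmult_eq_reg_l x); [|lra]. lra.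
Qed.

Lemma M2_gen (M M' : R -> R) r :
  (forall x, Rabs x < Rr -> is_derive M x (M' x) /\ x * M' x + 2 * M x = 0) ->
  0 < r < Rr -> M r = 0.
Proof.
  intros HM Hr.
  pose (N := fun x => x * x * M x).
  assert (E : N r = N 0).
  { apply (const_deriv0 N (fun x => (1 * x + x * 1) * M x + x * x * M' x) Rr); [| |lra].
    - intros x Hx. unfold N. apply (Rd_mult (fun t => t * t) M); [apply (Rd_mult (fun t => t) (fun t => t)); apply (is_derive_id (K := R_AbsRing)) | apply HM; auto].
    - intros x Hx. destruct (HM x) as [_ E]. rewrite Rabs_right; lra.
      replace ((1 * x + x * 1) * M x + x * x * M' x) with (x * (x * M' x + 2 * M x)) by ring.
      rewrite E; ring. }
  unfold N in E. rewrite !Rmult_0_l in E.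
  assert (r * r <> 0) by (apply Rmult_integral_contrapositive; lra).
  apply (Rmult_eq_reg_l (r * r)); auto. lra.
Qed.

Lemma M2_fst r : 0 < r < Rr -> RInt (fun t => fst (Cmult (G r t) (ee 2 t))) 0 (2*PI) = 0.
Proof.
  intros Hr. apply (M2_gen (fun r => RInt (fun t => fst (Cmult (G r t) (ee 2 t))) 0 (2*PI)) (fun x => RInt (fun t => fst (Cmult (Cmult (G1 x t) (ee 1 t)) (ee 2 t))) 0 (2*PI))); auto.
  intros x Hx. apply (core_fst G G1 Rr 2); auto. apply ee_per2.
Qed.
Lemma M2_snd r : 0 < r < Rr -> RInt (fun t => snd (Cmult (G r t) (ee 2 t))) 0 (2*PI) = 0.
Proof.
  intros Hr. apply (M2_gen (fun r => RInt (fun t => snd (Cmult (G r t) (ee 2 t))) 0 (2*PI)) (fun x => RInt (fun t => snd (Cmult (Cmult (G1 x t) (ee 1 t)) (ee 2 t))) 0 (2*PI))); auto.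
  intros x Hx. apply (core_snd G G1 Rr 2); auto. apply ee_per2.
Qed.

Variable U : R -> R -> R.
Hypothesis HU1 : forall r t, Rabs r < Rr -> is_derive (fun u => U u t) r (fst (Cmult (G r t) (ee 1 t))).
Hypothesis HU2 : forall r t, Rabs r < Rr -> continuity_2d_pt U r t.
Hypothesis HU0 : forall t, U 0 t = U 0 0.

Lemma c2_cos x y : continuity_2d_pt (fun _ t => cos t) x y.
Proof. apply (c2_comp1 cos (fun _ t => t)); [apply continuity_cos | apply c2_id2]. Qed.
Lemma c2_sin x y : continuity_2d_pt (fun _ t => sin t) x y.
Proof. apply (c2_comp1 sin (fun _ t => t)); [apply continuity_sin | apply c2_id2]. Qed.

Lemma exI (F : R -> R -> C) x : (forall r t, Rabs r < Rr -> C2cont F r t) -> Rabs x < Rr ->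
  ex_RInt (fun t => fst (F x t)) 0 (2*PI) /\ ex_RInt (fun t => snd (F x t)) 0 (2*PI).
Proof.
  intros HF Hx; split; [apply (ex_RInt_c2 (fun u t => fst (F u t))) | apply (ex_RInt_c2 (fun u t => snd (F u t)))];
  intros; apply HF; auto.
Qed.

Lemma CG0 r t : Rabs r < Rr -> C2cont (fun u t => Cmult (G u t) (ee 0 t)) r t.
Proof. intros; apply C2cont_mult; auto; apply C2cont_ee. Qed.
Lemma CG1 r t : Rabs r < Rr -> C2cont (fun u t => Cmult (G u t) (ee 1 t)) r t.
Proof. intros; apply C2cont_mult; auto; apply C2cont_ee. Qed.
Lemma CG2 r t : Rabs r < Rr -> C2cont (fun u t => Cmult (G u t) (ee 2 t)) r t.
Proof. intros; apply C2cont_mult; auto; apply C2cont_ee. Qed.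

Lemma RInt_c0 (c : R) : RInt (fun t => c * cos t) 0 (2*PI) = 0.
Proof.
  rewrite (RInt_extR _ (fun t => c * cos t + 0 * cos t)) by (intros; ring).
  rewrite RInt_lin2; [rewrite RInt_cos0'; Rring| |];
  apply (ex_RInt_continuous (V := R_CompleteNormedModule)); intros; apply continuity_pt_filterlim, continuity_cos.
Qed.
Lemma RInt_s0 (c : R) : RInt (fun t => c * sin t) 0 (2*PI) = 0.
Proof.
  rewrite (RInt_extR _ (fun t => c * sin t + 0 * sin t)) by (intros; ring).
  rewrite RInt_lin2; [rewrite RInt_sin0'; Rring| |];
  apply (ex_RInt_continuous (V := R_CompleteNormedModule)); intros; apply continuity_pt_filterlim, continuity_sin.
Qed.

Lemma Jc r : 0 < r < Rr -> RInt (fun t => U r t * cos t) 0 (2*PI) = PI * r * fst (G 0 0).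
Proof.
  intros Hr.
  assert (HD : forall x, Rabs x < Rr -> is_derive (fun x => RInt (fun t => U x t * cos t) 0 (2*PI)) x
              (RInt (fun t => fst (Cmult (G x t) (ee 1 t)) * cos t) 0 (2*PI))).
  { intros x Hx. apply (param_deriv (fun x t => U x t * cos t) (fun x t => fst (Cmult (G x t) (ee 1 t)) * cos t) Rr); auto.
    - intros r' t Hr'. apply (Rd_scal (fun u => U u t)); auto.
    - intros r' t Hr'. apply continuity_2d_pt_mult; [apply (CG1 r' t Hr') | apply c2_cos].
    - intros r' t Hr'. apply continuity_2d_pt_mult; [apply HU2; auto | apply c2_cos]. }
  assert (HV : forall x, 0 < x < Rr -> RInt (fun t => fst (Cmult (G x t) (ee 1 t)) * cos t) 0 (2*PI) = PI * fst (G 0 0)).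
  { intros x Hx. assert (Hx' : Rabs x < Rr) by (rewrite Rabs_right; lra).
    rewrite (RInt_extR _ (fun t => /2 * fst (Cmult (G x t) (ee 0 t)) + /2 * fst (Cmult (G x t) (ee 2 t)))).
    - rewrite RInt_lin2; [| apply (exI _ x CG0 Hx') | apply (exI _ x CG2 Hx')].
      rewrite M0_fst, M2_fst by lra. Rfield.
    - intros t. unfold ee. simpl. rewrite !Rmult_0_l, !Rmult_1_l, cos_0, sin_0, cos_2a_cos, sin_2a. field. }
  destruct (MVT_cor2 (fun x => RInt (fun t => U x t * cos t) 0 (2*PI))
      (fun x => RInt (fun t => fst (Cmult (G x t) (ee 1 t)) * cos t) 0 (2*PI)) 0 r) as [c [E Hc]]; [lra| |].
  - intros x Hx. apply is_derive_Reals, HD. rewrite Rabs_right; lra.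
  - rewrite HV in E by lra.
    rewrite (RInt_extR (fun t => U 0 t * cos t) (fun t => U 0 0 * cos t)) in E by (intros; rewrite HU0; auto).
    rewrite RInt_c0 in E. lra.
Qed.

Lemma Js r : 0 < r < Rr -> RInt (fun t => U r t * sin t) 0 (2*PI) = - (PI * r * snd (G 0 0)).
Proof.
  intros Hr.
  assert (HD : forall x, Rabs x < Rr -> is_derive (fun x => RInt (fun t => U x t * sin t) 0 (2*PI)) x
              (RInt (fun t => fst (Cmult (G x t) (ee 1 t)) * sin t) 0 (2*PI))).
  { intros x Hx. apply (param_deriv (fun x t => U x t * sin t) (fun x t => fst (Cmult (G x t) (ee 1 t)) * sin t) Rr); auto.
    - intros r' t Hr'. apply (Rd_scal (fun u => U u t)); auto.
    - intros r' t Hr'. apply continuity_2d_pt_mult; [apply (CG1 r' t Hr') | apply c2_sin].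
    - intros r' t Hr'. apply continuity_2d_pt_mult; [apply HU2; auto | apply c2_sin]. }
  assert (HV : forall x, 0 < x < Rr -> RInt (fun t => fst (Cmult (G x t) (ee 1 t)) * sin t) 0 (2*PI) = - (PI * snd (G 0 0))).
  { intros x Hx. assert (Hx' : Rabs x < Rr) by (rewrite Rabs_right; lra).
    rewrite (RInt_extR _ (fun t => (-/2) * snd (Cmult (G x t) (ee 0 t)) + /2 * snd (Cmult (G x t) (ee 2 t)))).
    - rewrite RInt_lin2; [| apply (exI _ x CG0 Hx') | apply (exI _ x CG2 Hx')].
      rewrite M0_snd, M2_snd by lra. Rfield.
    - intros t. unfold ee. simpl. rewrite !Rmult_0_l, !Rmult_1_l, cos_0, sin_0, cos_2a_sin, sin_2a. field. }
  destruct (MVT_cor2 (fun x => RInt (fun t => U x t * sin t) 0 (2*PI))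
      (fun x => RInt (fun t => fst (Cmult (G x t) (ee 1 t)) * sin t) 0 (2*PI)) 0 r) as [c [E Hc]]; [lra| |].
  - intros x Hx. apply is_derive_Reals, HD. rewrite Rabs_right; lra.
  - rewrite HV in E by lra.
    rewrite (RInt_extR (fun t => U 0 t * sin t) (fun t => U 0 0 * sin t)) in E by (intros; rewrite HU0; auto).
    rewrite RInt_s0 in E. lra.
Qed.

Lemma disc_bound r c0 B : 0 < r < Rr -> (forall t, Rabs (U r t - c0) <= B) ->
  Rabs (fst (G 0 0)) <= 2 * B / r /\ Rabs (snd (G 0 0)) <= 2 * B / r.
Proof.
  intros Hr HB. assert (Hr' : Rabs r < Rr) by (rewrite Rabs_right; lra).
  assert (HP := PI_RGT_0).
  assert (exc : ex_RInt cos 0 (2*PI)) by (apply (ex_RInt_continuous (V := R_CompleteNormedModule)); intros; apply continuity_pt_filterlim, continuity_cos).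
  assert (exs : ex_RInt sin 0 (2*PI)) by (apply (ex_RInt_continuous (V := R_CompleteNormedModule)); intros; apply continuity_pt_filterlim, continuity_sin).
  split.
  - assert (E : RInt (fun t => 1 * (U r t * cos t) + (- c0) * cos t) 0 (2*PI) = PI * r * fst (G 0 0)).
    { rewrite RInt_lin2.
      + rewrite Jc by auto. rewrite RInt_cos0'. Rring.
      + apply (ex_RInt_c2 (fun u t => U u t * cos t)). intros; apply continuity_2d_pt_mult; [apply HU2; auto| apply c2_cos].
      + exact exc. }
    assert (Hb := abs_RInt_le_const (fun t => 1 * (U r t * cos t) + - c0 * cos t) 0 (2*PI) B).
    rewrite E in Hb. 
    assert (Hb' : Rabs (PI * r * fst (G 0 0)) <= (2*PI - 0) * B).
    { apply Hb. lra.
      + apply (ex_RInt_c2 (fun u t => 1 * (U u t * cos t) + - c0 * cos t)). intros.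
        apply continuity_2d_pt_plus; apply continuity_2d_pt_mult; try apply continuity_2d_pt_const;
        try apply continuity_2d_pt_mult; try apply c2_cos; apply HU2; auto.
      + intros t _. replace (1 * (U r t * cos t) + - c0 * cos t) with ((U r t - c0) * cos t) by ring.
        rewrite Rabs_mult. specialize (HB t). pose proof (COS_bound t). 
        assert (Rabs (cos t) <= 1) by (apply Rabs_le; lra).
        assert (0 <= Rabs (U r t - c0)) by apply Rabs_pos.
        nra. }
    rewrite !Rabs_mult, (Rabs_right PI), (Rabs_right r) in Hb' by lra.
    apply (Rmult_le_reg_l (PI * r)). nra. unfold Rdiv. 
    replace (PI * r * (2 * B * / r)) with (2 * PI * B) by (field; lra). lra.
  - assert (E : RInt (fun t => 1 * (U r t * sin t) + (- c0) * sin t) 0 (2*PI) = - (PI * r * snd (G 0 0))).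
    { rewrite RInt_lin2.
      + rewrite Js by auto. rewrite RInt_sin0'. Rring.
      + apply (ex_RInt_c2 (fun u t => U u t * sin t)). intros; apply continuity_2d_pt_mult; [apply HU2; auto| apply c2_sin].
      + exact exs. }
    assert (Hb := abs_RInt_le_const (fun t => 1 * (U r t * sin t) + - c0 * sin t) 0 (2*PI) B).
    rewrite E in Hb. 
    assert (Hb' : Rabs (- (PI * r * snd (G 0 0))) <= (2*PI - 0) * B).
    { apply Hb. lra.
      + apply (ex_RInt_c2 (fun u t => 1 * (U u t * sin t) + - c0 * sin t)). intros.
        apply continuity_2d_pt_plus; apply continuity_2d_pt_mult; try apply continuity_2d_pt_const;
        try apply continuity_2d_pt_mult; try apply c2_sin; apply HU2; auto.
      + intros t _. replace (1 * (U r t * sin t) + - c0 * sin t) with ((U r t - c0) * sin t) by ring.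
        rewrite Rabs_mult. specialize (HB t). pose proof (SIN_bound t). 
        assert (Rabs (sin t) <= 1) by (apply Rabs_le; lra).
        assert (0 <= Rabs (U r t - c0)) by apply Rabs_pos.
        nra. }
    rewrite Rabs_Ropp, !Rabs_mult, (Rabs_right PI), (Rabs_right r) in Hb' by lra.
    apply (Rmult_le_reg_l (PI * r)). nra. unfold Rdiv. 
    replace (PI * r * (2 * B * / r)) with (2 * PI * B) by (field; lra). lra.
Qed.
End Disc.

Lemma Cmod_le_sum (x : C) : Cmod x <= Rabs (fst x) + Rabs (snd x).
Proof.
  replace x with (Cplus (RtoC (fst x)) (Cmult Ci (RtoC (snd x)))) at 1.
  - eapply Rle_trans; [apply Cmod_triangle|]. rewrite Cmod_mult. change Ci with Complex.Ci. rewrite Cmod_Ci, !Cmod_R. lra.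
  - destruct x as [a b]; unfold Ci, RtoC, Cplus, Cmult; simpl. f_equal; ring.
Qed.

Definition Wc (z : C) (r t : R) : C := Cplus z (Cmult (RtoC r) (ee 1 t)).

Lemma Wc_dist z r t : Cmod (Cminus (Wc z r t) z) = Rabs r.
Proof.
  unfold Wc, Cminus. replace (Cplus (Cplus z (Cmult (RtoC r) (ee 1 t))) (Copp z)) with (Cmult (RtoC r) (ee 1 t)) by ring.
  rewrite Cmod_mult, Cmod_R. unfold Cmod, ee; simpl. rewrite Rmult_1_l.
  replace (cos t * (cos t * 1) + sin t * (sin t * 1)) with 1  by (pose proof (sin2_cos2 t) as Hs; unfold Rsqr in Hs; nra).
  rewrite sqrt_1; ring.
Qed.

Lemma CD_Wr z r t : CD (fun u => Wc z u t) r (ee 1 t).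
Proof.
  assert (HR : CD (fun u => RtoC u) r (RtoC 1)) by (split; simpl; [apply (is_derive_id (K := R_AbsRing)) | apply Rd_const]).
  unfold Wc. eapply CD_eq. 2:(apply CD_plus; [apply CD_const | apply (CD_mult (fun u => RtoC u) (fun _ => ee 1 t) r _ _ HR (CD_const _ _))]).
  ring.
Qed.

Lemma CD_Wt z r t : CD (fun t => Wc z r t) t (Cmult (RtoC r) (Cmult Ci (ee 1 t))).
Proof.
  unfold Wc. eapply CD_eq. 2:(apply CD_plus; [apply CD_const | apply (CD_mult (fun _ => RtoC r) (fun t => ee 1 t)); [apply CD_const|apply CD_ee]]).
  ring.
Qed.

Lemma C2cont_W z x y : C2cont (Wc z) x y.
Proof.
  unfold Wc. apply C2cont_plus; [apply C2cont_const|]. apply C2cont_mult; [|apply C2cont_ee].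
  split; simpl; [apply continuity_2d_pt_id1 | apply continuity_2d_pt_const].
Qed.


Lemma Rd_ln (f : R -> R) x a : is_derive f x a -> 0 < f x -> is_derive (fun t => ln (f t)) x (a * / f x).
Proof.
  intros H Hp. apply (is_derive_comp ln f); auto. apply is_derive_Reals, derivable_pt_lim_ln; auto.
Qed.

Lemma ln_cont x : 0 < x -> continuity_pt ln x.
Proof. intros Hx. apply derivable_continuous_pt. exists (/ x). apply derivable_pt_lim_ln; auto. Qed.

Definition Qn (w : C) : R := fst w * fst w + snd w * snd w.

Lemma Qn_pos w : w <> RtoC 0 -> 0 < Qn w.
Proof.
  intros H. unfold Qn. destruct w as [a b]; simpl.
  destruct (Req_dec a 0); destruct (Req_dec b 0); subst; try nra. exfalso; apply H; auto.
Qed.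

Section DP.
Variables (a : nat -> C) (l : list nat) (z : C) (Rr : R).
Let F := dpl a l.
Let F1 := dpl (dcoef a) l.
Let F2 := dpl (dcoef (dcoef a)) l.
Hypothesis Hnz : forall r t, Rabs r < Rr -> F (Wc z r t) <> RtoC 0.

Let GG r t := Cmult (F1 (Wc z r t)) (Cinv (F (Wc z r t))).
Let GG1 r t := Cdiv (Cminus (Cmult (F2 (Wc z r t)) (F (Wc z r t))) (Cmult (F1 (Wc z r t)) (F1 (Wc z r t))))
                    (Cmult (F (Wc z r t)) (F (Wc z r t))).
Let UU r t := / 2 * ln (Qn (F (Wc z r t))).

Lemma DP_H1 r t : Rabs r < Rr -> CD (fun u => GG u t) r (Cmult (GG1 r t) (ee 1 t)).
Proof.
  intros Hr. specialize (Hnz r t Hr). unfold GG, GG1.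
  eapply CD_eq. 2:(apply CD_mult; [apply (CD_dp (dcoef a) l (fun u => Wc z u t)); apply CD_Wr
                      | apply CD_inv; [exact Hnz| apply (CD_dp a l (fun u => Wc z u t)); apply CD_Wr]]).
  cbv beta; cbv beta; fold F F1 F2. field. auto.
Qed.

Lemma DP_H2 r t : Rabs r < Rr -> CD (fun t => GG r t) t (Cmult (GG1 r t) (Cmult (RtoC r) (Cmult Ci (ee 1 t)))).
Proof.
  intros Hr. specialize (Hnz r t Hr). unfold GG, GG1.
  eapply CD_eq. 2:(apply CD_mult; [apply (CD_dp (dcoef a) l (fun t => Wc z r t)); apply CD_Wt
                      | apply CD_inv; [exact Hnz| apply (CD_dp a l (fun t => Wc z r t)); apply CD_Wt]]).
  cbv beta; fold F F1 F2. field. auto.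
Qed.

Lemma DP_H3 r t : Rabs r < Rr -> C2cont GG r t.
Proof.
  intros Hr. unfold GG. apply C2cont_mult.
  - apply (C2cont_dp (dcoef a) l (Wc z)), C2cont_W.
  - apply C2cont_inv; [apply Hnz; auto|]. apply (C2cont_dp a l (Wc z)), C2cont_W.
Qed.

Lemma DP_H4 r t : Rabs r < Rr -> C2cont GG1 r t.
Proof.
  intros Hr. unfold GG1, Cdiv, Cminus.
  assert (A0 := C2cont_dp a l (Wc z) r t (C2cont_W z r t)).
  assert (A1 := C2cont_dp (dcoef a) l (Wc z) r t (C2cont_W z r t)).
  assert (A2 := C2cont_dp (dcoef (dcoef a)) l (Wc z) r t (C2cont_W z r t)).
  apply C2cont_mult.
  - apply C2cont_plus; [apply C2cont_mult; auto| apply C2cont_opp; apply C2cont_mult; auto].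
  - apply C2cont_inv; [|apply C2cont_mult; auto].
    intro E. apply (Hnz r t Hr). apply Cmod_eq_0. assert (E2 := f_equal Cmod E). rewrite Cmod_mult, Cmod_0 in E2. apply Rmult_integral in E2; destruct E2; auto.
Qed.

Lemma W2pi r : Wc z r (2*PI) = Wc z r 0.
Proof. unfold Wc, ee. rewrite !Rmult_1_l, cos_2PI, sin_2PI, cos_0, sin_0. reflexivity. Qed.
Lemma W0 t : Wc z 0 t = z.
Proof. unfold Wc. ring. Qed.

Lemma DP_H5 r : GG r (2*PI) = GG r 0.
Proof. unfold GG. rewrite W2pi. auto. Qed.
Lemma DP_HG0 t : GG 0 t = GG 0 0.
Proof. unfold GG. rewrite !W0. auto. Qed.
Lemma DP_HU0 t : UU 0 t = UU 0 0.
Proof. unfold UU. rewrite !W0. auto. Qed.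

Lemma DP_HU1 r t : Rabs r < Rr -> is_derive (fun u => UU u t) r (fst (Cmult (GG r t) (ee 1 t))).
Proof.
  intros Hr. specialize (Hnz r t Hr). unfold UU, GG.
  destruct (CD_dp a l (fun u => Wc z u t) r (ee 1 t) (CD_Wr z r t)) as [A B].
  pose proof (Qn_pos _ Hnz) as Hq.
  set (fx := fun u => fst (F (Wc z u t))) in *. set (fy := fun u => snd (F (Wc z u t))) in *.
  assert (HQ := Rd_plus _ _ r _ _ (Rd_mult fx fx r _ _ A A) (Rd_mult fy fy r _ _ B B)).
  assert (HL := Rd_ln _ r _ HQ).
  assert (HS := Rd_scal _ r _ (/2) (HL ltac:(exact Hq))).
  eapply Rd_ext in HS. 2:{ intros u. cbv beta. rewrite Rmult_comm. unfold Qn. reflexivity. }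
  eapply Rd_eq; [|exact HS].
  unfold fx, fy. fold F1. unfold Qn in Hq |- *.
  destruct (F (Wc z r t)) as [p q]. destruct (F1 (Wc z r t)) as [c d]. unfold ee.
  simpl in *. field. lra.
Qed.

Lemma DP_HU2 r t : Rabs r < Rr -> continuity_2d_pt UU r t.
Proof.
  intros Hr. unfold UU. apply continuity_2d_pt_mult; [apply continuity_2d_pt_const|].
  apply continuity_1d_2d_pt_comp. apply ln_cont, Qn_pos, Hnz; auto.
  destruct (C2cont_dp a l (Wc z) r t (C2cont_W z r t)) as [A B].
  unfold Qn. apply continuity_2d_pt_plus; apply continuity_2d_pt_mult; auto.
Qed.

Lemma DP_bound r c0 B : 0 < r < Rr -> (forall t, Rabs (UU r t - c0) <= B) ->
  Cmod (Cmult (F1 z) (Cinv (F z))) <= 4 * B / r.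
Proof.
  intros Hr HB.
  destruct (disc_bound GG GG1 Rr DP_H1 DP_H2 DP_H3 DP_H4 DP_H5 DP_HG0 UU DP_HU1 DP_HU2 DP_HU0 r c0 B Hr HB) as [E1 E2].
  unfold GG in E1, E2. rewrite W0 in E1, E2.
  eapply Rle_trans; [apply Cmod_le_sum|]. unfold Rdiv in *. lra.
Qed.
End DP.

Lemma Qn_Cmod w : Qn w = Cmod w * Cmod w.
Proof. unfold Cmod, Qn. rewrite sqrt_sqrt. simpl; ring. simpl. nra. Qed.

Lemma half_ln_Qn w : w <> RtoC 0 -> / 2 * ln (Qn w) = ln (Cmod w).
Proof.
  intros H. assert (0 < Cmod w) by (apply Cmod_gt_0; auto).
  rewrite Qn_Cmod, ln_mult by auto. field.
Qed.

Lemma dp_disc a l z Rr r m M : 0 < r < Rr -> 0 < m ->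
  (forall w, Cmod (Cminus w z) < Rr -> m <= Cmod (dpl a l w) <= M) ->
  Cmod (Cmult (dpl (dcoef a) l z) (Cinv (dpl a l z))) <= 2 * (ln M - ln m) / r.
Proof.
  intros Hr Hm HB.
  assert (Hnz : forall r t, Rabs r < Rr -> dpl a l (Wc z r t) <> RtoC 0).
  { intros r' t Hr' E. destruct (HB (Wc z r' t)) as [H1 _]. rewrite Wc_dist; auto.
    rewrite E, Cmod_0 in H1. lra. }
  replace (2 * (ln M - ln m) / r) with (4 * ((ln M - ln m)/2) / r) by (field; lra).
  apply (DP_bound a l z Rr Hnz r ((ln M + ln m)/2)); auto.
  intros t. cbv beta. rewrite half_ln_Qn by (apply Hnz; rewrite Rabs_right; lra).
  destruct (HB (Wc z r t)) as [H1 H2]. rewrite Wc_dist, Rabs_right; lra.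
  assert (ln m <= ln (Cmod (dpl a l (Wc z r t)))).
  { destruct (Req_dec m (Cmod (dpl a l (Wc z r t)))) as [<-|]; [lra|]. left; apply ln_increasing; lra. }
  assert (ln (Cmod (dpl a l (Wc z r t))) <= ln M).
  { destruct (Req_dec M (Cmod (dpl a l (Wc z r t)))) as [<-|]; [lra|]. left; apply ln_increasing; lra. }
  apply Rabs_le; lra.
Qed.

Lemma logF_path a l (g : R -> C) t v : CD g t v -> dpl a l (g t) <> RtoC 0 ->
  is_derive (fun t => / 2 * ln (Qn (dpl a l (g t)))) t
    (fst (Cmult (Cmult (dpl (dcoef a) l (g t)) (Cinv (dpl a l (g t)))) v)).
Proof.
  intros Hg Hnz.
  destruct (CD_dp a l g t v Hg) as [A B].
  pose proof (Qn_pos _ Hnz) as Hq.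
  set (fx := fun u => fst (dpl a l (g u))) in *. set (fy := fun u => snd (dpl a l (g u))) in *.
  assert (HQ := Rd_plus _ _ t _ _ (Rd_mult fx fx t _ _ A A) (Rd_mult fy fy t _ _ B B)).
  assert (HL := Rd_ln _ t _ HQ).
  assert (HS := Rd_scal _ t _ (/2) (HL ltac:(exact Hq))).
  eapply Rd_ext in HS. 2:{ intros u. cbv beta. rewrite Rmult_comm. unfold Qn. reflexivity. }
  eapply Rd_eq; [|exact HS].
  unfold fx, fy. unfold Qn in Hq |- *.
  destruct (dpl a l (g t)) as [p q]. destruct (dpl (dcoef a) l (g t)) as [c d]. destruct v as [v1 v2].
  simpl in *. field. lra.
Qed.

Lemma CD_aff (s' d : C) t : CD (fun t => Cplus s' (Cmult (RtoC t) d)) t d.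
Proof. split; simpl; auto_derive; auto; ring. Qed.

Lemma fst_le_Cmod (x : C) : fst x <= Cmod x.
Proof. pose proof (re_le_Cmod x). unfold Re in H. pose proof (Rle_abs (fst x)). lra. Qed.
Lemma abs_fst_le_Cmod (x : C) : Rabs (fst x) <= Cmod x.
Proof. apply (re_le_Cmod x). Qed.

Section Seg.
Variables (a : nat -> C) (l : list nat) (s s' : C) (K : R).
Let F := dpl a l.
Let F1 := dpl (dcoef a) l.
Let d := Cminus s s'.
Let zz t := Cplus s' (Cmult (RtoC t) d).
Hypothesis HK0 : 0 <= K.
Hypothesis Hnz : forall t, 0 <= t <= 1 -> F (zz t) <> RtoC 0.
Hypothesis HK : forall t, 0 <= t <= 1 -> Cmod (Cmult (F1 (zz t)) (Cinv (F (zz t)))) <= K.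

Lemma seg_growth t : 0 <= t <= 1 -> Cmod (F (zz t)) <= Cmod (F s') * exp (K * Cmod d).
Proof.
  intros Ht.
  assert (Hz0 : zz 0 = s') by (unfold zz; ring).
  assert (E : / 2 * ln (Qn (F (zz t))) - / 2 * ln (Qn (F (zz 0))) <= K * Cmod d).
  { destruct (Req_dec t 0) as [->|Ht0]; [rewrite Rminus_eq_0; apply Rmult_le_pos; auto; apply Cmod_ge_0|].
    destruct (MVT_cor2 (fun t => / 2 * ln (Qn (F (zz t))))
      (fun t => fst (Cmult (Cmult (F1 (zz t)) (Cinv (F (zz t)))) d)) 0 t) as [c [Ec Hc]]; [lra| |].
    - intros x Hx. apply is_derive_Reals. apply (logF_path a l zz x d (CD_aff s' d x)). apply Hnz; lra.
    - rewrite Ec. eapply Rle_trans; [apply Rmult_le_compat_r; [lra| apply fst_le_Cmod]|].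
      rewrite Cmod_mult. 
      assert (Cmod (Cmult (F1 (zz c)) (Cinv (F (zz c)))) <= K) by (apply HK; lra).
      pose proof (Cmod_ge_0 d). pose proof (Cmod_ge_0 (Cmult (F1 (zz c)) (Cinv (F (zz c))))).
      assert (Cmod (Cmult (F1 (zz c)) (Cinv (F (zz c)))) * Cmod d <= K * Cmod d) by (apply Rmult_le_compat_r; auto).
      assert (0 <= Cmod (Cmult (F1 (zz c)) (Cinv (F (zz c)))) * Cmod d) by (apply Rmult_le_pos; auto).
      assert (Cmod (Cmult (F1 (zz c)) (Cinv (F (zz c)))) * Cmod d * (t - 0) <= Cmod (Cmult (F1 (zz c)) (Cinv (F (zz c)))) * Cmod d * 1)
        by (apply Rmult_le_compat_l; lra). lra. }
  rewrite Hz0, !half_ln_Qn in E; [| fold F; rewrite <- Hz0; apply Hnz; lra | apply Hnz; auto].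
  assert (0 < Cmod (F (zz t))) by (apply Cmod_gt_0, Hnz; auto).
  assert (0 < Cmod (F s')) by (apply Cmod_gt_0; rewrite <- Hz0; apply Hnz; lra).
  rewrite <- (exp_ln (Cmod (F (zz t)))) by auto. rewrite <- (exp_ln (Cmod (F s'))) at 1 by auto.
  rewrite <- exp_plus. destruct (Req_dec (ln (Cmod (F (zz t)))) (ln (Cmod (F s')) + K * Cmod d)) as [->|]; [lra|].
  left; apply exp_increasing; lra.
Qed.

Lemma seg_bound : Cmod (Cminus (F s) (F s')) <= K * Cmod d * exp (K * Cmod d) * Cmod (F s').
Proof.
  set (e := Cminus (F s) (F s')).
  assert (Hz1 : zz 1 = s) by (unfold zz, d; ring).
  assert (Hz0 : zz 0 = s') by (unfold zz; ring).
  destruct (MVT_cor2 (fun t => fst (Cmult (Cconj e) (F (zz t))))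
      (fun t => fst (Cmult (Cconj e) (Cmult (F1 (zz t)) d))) 0 1) as [c [Ec Hc]]; [lra| |].
  - intros x Hx. apply is_derive_Reals.
    destruct (CD_mult (fun _ => Cconj e) (fun t => F (zz t)) x _ _ (CD_const _ x) (CD_dp a l zz x d (CD_aff s' d x))) as [A _].
    eapply Rd_eq; [|exact A]. simpl. fold F1. ring.
  - rewrite Hz1, Hz0 in Ec.
    assert (E2 : fst (Cmult (Cconj e) (F s)) - fst (Cmult (Cconj e) (F s')) = Cmod e * Cmod e).
    { rewrite <- Qn_Cmod. unfold e, Qn. destruct (F s), (F s'). simpl. ring. }
    rewrite E2 in Ec.
    assert (B1 : Cmod (Cmult (Cconj e) (Cmult (F1 (zz c)) d)) <= Cmod e * (K * Cmod (F s') * exp (K * Cmod d)) * Cmod d).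
    { rewrite !Cmod_mult, Cmod_conj.
      assert (HF := seg_growth c ltac:(lra)).
      assert (Hk := HK c ltac:(lra)).
      assert (Hn := Hnz c ltac:(lra)).
      replace (F1 (zz c)) with (Cmult (Cmult (F1 (zz c)) (Cinv (F (zz c)))) (F (zz c))) by (field; auto).
      rewrite Cmod_mult.
      pose proof (Cmod_ge_0 e). pose proof (Cmod_ge_0 d). pose proof (Cmod_ge_0 (F (zz c))).
      pose proof (Cmod_ge_0 (Cmult (F1 (zz c)) (Cinv (F (zz c))))).
      pose proof (Cmod_ge_0 (F s')). pose proof (exp_pos (K * Cmod d)).
      assert (Hkf : Cmod (Cmult (F1 (zz c)) (Cinv (F (zz c)))) * Cmod (F (zz c)) <= K * (Cmod (F s') * exp (K * Cmod d)))
        by (apply Rmult_le_compat; auto).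
      replace (Cmod e * (Cmod (Cmult (F1 (zz c)) (Cinv (F (zz c)))) * Cmod (F (zz c)) * Cmod d))
        with (Cmod e * (Cmod (Cmult (F1 (zz c)) (Cinv (F (zz c)))) * Cmod (F (zz c))) * Cmod d) by ring.
      replace (K * Cmod (F s') * exp (K * Cmod d)) with (K * (Cmod (F s') * exp (K * Cmod d))) by ring.
      apply Rmult_le_compat_r; auto. apply Rmult_le_compat_l; auto. }
    assert (Hle : Cmod e * Cmod e <= Cmod e * (K * Cmod (F s') * exp (K * Cmod d)) * Cmod d).
    { rewrite Ec. replace (1 - 0) with 1 by ring. rewrite Rmult_1_r.
      eapply Rle_trans; [apply fst_le_Cmod|]. exact B1. }
    pose proof (Cmod_ge_0 e) as He.
    destruct (Req_dec (Cmod e) 0) as [E0|E0]; [rewrite E0; pose proof (Cmod_ge_0 d); pose proof (Cmod_ge_0 (F s')); pose proof (exp_pos (K * Cmod d)); 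
      repeat apply Rmult_le_pos; lra|].
    apply (Rmult_le_reg_l (Cmod e)); [destruct He as [He|He]; [exact He| exfalso; apply E0; auto]|]. 
    replace (Cmod e * (K * Cmod d * exp (K * Cmod d) * Cmod (F s'))) with (Cmod e * (K * Cmod (F s') * exp (K * Cmod d)) * Cmod d) by ring.
    exact Hle.
Qed.
End Seg.

Lemma abs_snd_le_Cmod (x : C) : Rabs (snd x) <= Cmod x.
Proof. pose proof (Rmax_Cmod x). pose proof (Rmax_r (Rabs (fst x)) (Rabs (snd x))). lra. Qed.

Lemma sqrt_alpha D : 0 < LL D -> sqrt (alpha D) = / LL D.
Proof. intros H. unfold alpha. rewrite sqrt_inv, sqrt_pow2; lra. Qed.

Lemma Omega2_convex D s s' t : Omega2 D s -> Omega2 D s' -> 0 <= t <= 1 ->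
  Omega2 D (Cplus s' (Cmult (RtoC t) (Cminus s s'))).
Proof.
  unfold Omega2, Cminus, s0. simpl. intros [[A1 A2] A3] [[B1 B2] B3] Ht.
  set (x := - (1/10) * alpha D * ln (LL D)) in *.
  split; [split|].
  - assert (0 <= t * (fst s + - / 2 - x)) by (apply Rmult_le_pos; lra).
    assert (0 <= (1 - t) * (fst s' + - / 2 - x)) by (apply Rmult_le_pos; lra).
    destruct (Req_dec t 0); [subst; lra|].
    assert (0 < t * (fst s + - / 2 - x)) by (apply Rmult_lt_0_compat; lra). lra.
  - assert (0 <= t * (1/2 - (fst s + - / 2))) by (apply Rmult_le_pos; lra).
    assert (0 <= (1 - t) * (1/2 - (fst s' + - / 2))) by (apply Rmult_le_pos; lra).
    destruct (Req_dec t 0); [subst; lra|].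
    assert (0 < t * (1/2 - (fst s + - / 2))) by (apply Rmult_lt_0_compat; lra). lra.
  - set (a := snd s + - INR D) in *. set (b := snd s' + - INR D) in *.
    replace (snd s' + (t * (snd s + - snd s') + 0 * (fst s + - fst s')) + - INR D) with ((1 - t) * b + t * a) by (unfold a, b; ring).
    eapply Rle_lt_trans; [apply Rabs_triang|]. rewrite !Rabs_mult, (Rabs_right t), (Rabs_right (1-t)) by lra.
    assert (t * Rabs a <= t * (1 + 10 * LL D)) by (apply Rmult_le_compat_l; lra).
    assert ((1-t) * Rabs b <= (1-t) * (1 + 10 * LL D)) by (apply Rmult_le_compat_l; lra).
    destruct (Req_dec t 0); [subst; lra|].
    assert (t * Rabs a < t * (1 + 10 * LL D)) by (apply Rmult_lt_compat_l; lra). lra.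
Qed.

Lemma Omega2_disc D z w : 4 <= LL D -> Omega2 D z -> Cmod (Cminus w z) < 3 / (2 * LL D) -> Omega1 D w.
Proof.
  intros HL Hz Hw. set (L := LL D) in *.
  assert (Hl : ln L <= L - 1) by (pose proof (exp_ineq1_le (ln L)); rewrite exp_ln in H by lra; lra).
  assert (Hl0 : 0 < ln L) by (rewrite <- ln_1; apply ln_increasing; lra).
  unfold Omega1, Omega2 in *. rewrite sqrt_alpha by (unfold L in *; lra). fold L in Hz |- *.
  unfold alpha in Hz. fold L in Hz.
  pose proof (abs_fst_le_Cmod (Cminus w z)). pose proof (abs_snd_le_Cmod (Cminus w z)).
  assert (E1 : fst (Cminus w (s0 D)) = fst (Cminus w z) + fst (Cminus z (s0 D))) by (simpl; ring).
  assert (E2 : snd (Cminus w (s0 D)) = snd (Cminus w z) + snd (Cminus z (s0 D))) by (simpl; ring).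
  unfold Re, Im in *. rewrite E1, E2.
  destruct Hz as [[A1 A2] A3].
  assert (HR : 3 / (2 * L) <= 3 / 8) by (apply Rmult_le_compat_l; [lra| apply Rinv_le_contravar; lra]).
  assert (Hx : ln L / (10 * L^2) <= / (2 * L)).
  { replace (ln L / (10 * L^2)) with ((ln L / (5*L)) * / (2*L)) by (field; lra).
    assert (ln L / (5*L) <= 1).
    { apply Rmult_le_reg_r with (5*L); [lra|]. unfold Rdiv; rewrite Rmult_assoc, Rinv_l; lra. }
    assert (0 < / (2 * L)) by (apply Rinv_0_lt_compat; lra).
    rewrite <- (Rmult_1_l (/ (2*L))) at 2. apply Rmult_le_compat_r; lra. }
  assert (A1' : - (ln L / (10 * L ^ 2)) < fst (Cminus z (s0 D))).
  { eapply Rle_lt_trans; [|exact A1]. right. field. lra. }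
  split; [split|].
  - assert (Hf : Rabs (fst (Cminus w z)) < 3 / (2 * L)) by lra. apply Rabs_def2 in Hf.
    assert (- 2 * / L = - (/ (2*L)) - 3 / (2 * L)) by (field; lra). lra.
  - assert (Hf : Rabs (fst (Cminus w z)) < 3 / (2 * L)) by lra. apply Rabs_def2 in Hf.
    assert (3 / (2 * L) < 1/2) by (apply (Rmult_lt_reg_l (2 * L)); [lra| field_simplify; lra]). lra.
  - eapply Rle_lt_trans; [apply Rabs_triang|]. lra.
Qed.

Lemma ln3_ge1 : 1 <= ln 3.
Proof.
  rewrite <- (ln_exp 1) at 1. destruct (Req_dec (exp 1) 3) as [E|E]; [rewrite E; lra|].
  left; apply ln_increasing; [apply exp_pos| pose proof exp_le_3; lra].
Qed.
Lemma ln2_lt1 : ln 2 < 1.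
Proof.
  rewrite <- (ln_exp 1). apply ln_increasing; [lra|]. pose proof (exp_ineq1 1 ltac:(lra)). lra.
Qed.

Lemma LL_ge4 D : (81 <= D)%nat -> 4 <= LL D.
Proof.
  intros H. unfold LL. apply le_INR in H.
  assert (E : ln (INR 81) = 4 * ln 3).
  { replace (INR 81) with (3 ^ 4) by (simpl; ring). rewrite ln_pow by lra. simpl; ring. }
  pose proof ln3_ge1.
  assert (ln (INR 81) <= ln (INR D)).
  { destruct (Req_dec (INR 81) (INR D)) as [<-|]; [lra|]. left; apply ln_increasing; [simpl; lra| lra]. }
  lra.
Qed.

Lemma FF_dpl D chi psi s : FF D chi psi s = dpl (fun n => Cmult (nu chi n) (psi n)) (seq 1 (D ^ 5)) s.
Proof. reflexivity. Qed.

Theorem corollary2p9 :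
  exists (C0 : R) (D0 : nat), 0 < C0 /\
  forall (D : nat) (chi psi : nat -> C) (s s' : C),
    (D0 <= D)%nat ->
    primitive_char D chi -> real_char chi ->
    in_Psi_star D chi psi ->
    Omega2 D s -> Omega2 D s' ->
    Cmod (Cminus s s') <= / (LL D * ln (LL D)) ->
    Cmod (Cminus (Cdiv (FF D chi psi s) (FF D chi psi s')) (RtoC 1))
      <= C0 * (Cmod (Cminus s s') * LL D * ln (LL D)).
Proof.
  exists (18 * exp 18), 81%nat. split; [pose proof (exp_pos 18); lra|].
  intros D chi psi s s' HD _ _ HP Hs Hs' Hd.
  destruct HP as [_ [[M1 [HM1 HB1]] [[M2 [HM2 HB2]] _]]].
  pose proof (LL_ge4 D HD) as HL.
  set (L := LL D) in *.
  set (lam := ln L) in *.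
  assert (Hlam : 1 <= lam).
  { unfold lam. assert (ln 4 = 2 * ln 2) by (replace 4 with (2^2) by ring; rewrite ln_pow by lra; simpl; ring).
    pose proof ln_lt_2. assert (ln 4 <= ln L).
    { destruct (Req_dec 4 L) as [<-|]; [lra|]. left; apply ln_increasing; lra. }
    lra. }
  assert (Hlam2 : ln lam <= lam - 1) by (pose proof (exp_ineq1_le (ln lam)); rewrite exp_ln in H by lra; lra).
  set (a := fun n => Cmult (nu chi n) (psi n)).
  set (l := seq 1 (D ^ 5)).
  set (Mb := L ^ 3 * lam).
  assert (HMb : 0 < Mb) by (unfold Mb; apply Rmult_lt_0_compat; [apply pow_lt|]; lra).
  set (mb := / (2 * Mb)).
  assert (Hmb : 0 < mb) by (unfold mb; apply Rinv_0_lt_compat; lra).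
  assert (HO1 : forall w, Omega1 D w -> mb <= Cmod (dpl a l w) <= Mb).
  { intros w Hw. specialize (HB1 w Hw). specialize (HB2 w Hw). cbv beta in HB1, HB2.
    rewrite !FF_dpl in *. fold a l in HB1, HB2.
    set (Fw := dpl a l w) in *. set (Gw := GG D chi psi w) in *.
    pose proof (Cmod_ge_0 Fw) as HF0. pose proof (Cmod_ge_0 Gw) as HG0.
    assert (HFG : 1 / 2 <= Cmod Fw * Cmod Gw).
    { rewrite <- Cmod_mult.
      assert (E : Cplus (Cmult Fw Gw) (Copp (Cminus (Cmult Fw Gw) (RtoC 1))) = RtoC 1) by ring.
      assert (T := Cmod_triangle (Cmult Fw Gw) (Copp (Cminus (Cmult Fw Gw) (RtoC 1)))).
      rewrite E, Cmod_opp, Cmod_1 in T. lra. }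
    assert (Gpos : 0 < Cmod Gw).
    { destruct (Rle_lt_or_eq_dec 0 (Cmod Gw) HG0) as [?|E]; auto. rewrite <- E in HFG. lra. }
    split; [|unfold Mb; lra].
    unfold mb. apply (Rmult_le_reg_l (2 * Mb)); [lra|]. rewrite Rinv_r by lra.
    assert (Cmod Gw <= Mb) by (unfold Mb; lra).
    assert (Cmod Fw * Cmod Gw <= Cmod Fw * Mb) by (apply Rmult_le_compat_l; lra). lra. }
  set (K := 18 * L * lam).
  assert (HlnM : ln Mb - ln mb <= 9 * lam).
  { unfold mb. rewrite ln_Rinv, ln_mult by lra. unfold Mb. rewrite ln_mult, ln_pow by (try apply pow_lt; lra).
    fold lam. simpl. pose proof ln2_lt1. lra. }
  assert (HK : forall t, 0 <= t <= 1 ->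
     Cmod (Cmult (dpl (dcoef a) l (Cplus s' (Cmult (RtoC t) (Cminus s s')))) (Cinv (dpl a l (Cplus s' (Cmult (RtoC t) (Cminus s s')))))) <= K).
  { intros t Ht. eapply Rle_trans.
    - apply (dp_disc a l _ (3 / (2 * L)) (/ L) mb Mb).
      + split; [apply Rinv_0_lt_compat; lra|]. apply (Rmult_lt_reg_l (2 * L)); [lra|]. field_simplify; lra.
      + exact Hmb.
      + intros w Hw. apply HO1. apply (Omega2_disc D (Cplus s' (Cmult (RtoC t) (Cminus s s')))); auto.
        apply Omega2_convex; auto.
    - unfold K. replace (2 * (ln Mb - ln mb) / / L) with (2 * L * (ln Mb - ln mb)) by (field; lra).
      nra. }
  assert (Hnz : forall t, 0 <= t <= 1 -> dpl a l (Cplus s' (Cmult (RtoC t) (Cminus s s'))) <> RtoC 0).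
  { intros t Ht E. assert (HO := HO1 (Cplus s' (Cmult (RtoC t) (Cminus s s')))).
    rewrite E, Cmod_0 in HO. assert (mb <= 0); [|lra]. apply HO.
    apply (Omega2_disc D (Cplus s' (Cmult (RtoC t) (Cminus s s')))); [exact HL| apply Omega2_convex; auto|].
    replace (Cminus (Cplus s' (Cmult (RtoC t) (Cminus s s'))) (Cplus s' (Cmult (RtoC t) (Cminus s s')))) with (RtoC 0) by ring. rewrite Cmod_0. fold L. apply Rdiv_lt_0_compat; lra. }
  assert (HK0 : 0 <= K) by (unfold K; nra).
  pose proof (seg_bound a l s s' K HK0 Hnz HK) as Hseg.
  assert (Hs'0 : dpl a l s' <> RtoC 0).
  { replace s' with (Cplus s' (Cmult (RtoC 0) (Cminus s s'))) at 1 by ring. apply Hnz; lra. }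
  assert (HF0 : 0 < Cmod (dpl a l s')) by (apply Cmod_gt_0; auto).
  rewrite !FF_dpl. fold a l.
  replace (Cminus (Cdiv (dpl a l s) (dpl a l s')) (RtoC 1)) with (Cdiv (Cminus (dpl a l s) (dpl a l s')) (dpl a l s'))
    by (field; auto).
  rewrite Cmod_div by auto.
  set (dd := Cmod (Cminus s s')) in *.
  assert (Hdd : 0 <= dd) by apply Cmod_ge_0.
  assert (HKd : K * dd <= 18).
  { unfold K. replace 18 with (18 * (L * lam) * / (L * lam)) at 2 by (field; nra).
    replace (18 * L * lam * dd) with (18 * (L * lam) * dd) by ring.
    apply Rmult_le_compat_l; [nra| exact Hd]. }
  assert (He : exp (K * dd) <= exp 18).
  { destruct (Req_dec (K * dd) 18) as [->|]; [lra|]. left; apply exp_increasing; lra. }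
  unfold Rdiv. apply (Rmult_le_reg_r (Cmod (dpl a l s'))); [exact HF0|].
  rewrite Rmult_assoc, Rinv_l by lra. rewrite Rmult_1_r.
  eapply Rle_trans; [exact Hseg|].
  apply Rmult_le_compat_r; [lra|].
  unfold K. replace (18 * exp 18 * (dd * L * lam)) with ((18 * L * lam * dd) * exp 18) by ring.
  apply Rmult_le_compat_l; [repeat apply Rmult_le_pos; lra| exact He].
Qed.
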